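(* Let $(\mathsf{Proc},\mathsf{Lab},\to,\rightsquigarrow)$ be a combined LTS that admits pre-reversibility. If $\iota_1$ and $\iota_2$ are two independence relations on its transitions such that both resulting LTSIs satisfy SP, BTI and PCI, then the two LTSIs have the same event equivalence $\sim$, the same core independence $\odot$, the same causal ordering $\le$ and the same conflict relation $\#$.
   Context: A combined LTS consists of processes $\mathsf{Proc}$, labels $\mathsf{Lab}$, a forward relation $P\xrightarrow aQ$ and a backward relation $P\rightsquigarrow^aQ$ with $P\xrightarrow aQ$ iff $Q\rightsquigarrow^aP$. A transition is a forward or backward step $t$ with inverse $\bar t$ (the same step in the opposite direction). Transitions are coinitial if they share a source; a path is a finite sequence of transitions each ending where the next starts; a path is rooted if its source cannot perform a backward transition. An LTSI adds an irreflexive symmetric relation $\iota$ on transitions (an independence relation). (SP) if coinitial $t:P\to Q$, $u:P\to R$ with $t\mathrel\iota u$ then there exist $u':Q\to S$ (same label and direction as $u$) and $t':R\to S$ (same label and direction as $t$); (BTI) distinct coinitial backward transitions are independent; (WF) there is no infinite sequence $P_0,P_1,\dots$ with a forward transition $P_{i+1}\to P_i$ for all $i$; (PCI) if $t:P\to Q$, $u:P\to R$, $u':Q\to S$, $t':R\to S$ with $u'$ having the label and direction of $u$, $t'$ those of $t$, and $t\mathrel\iota u$, then $u'\mathrel\iota\bar t$. An LTSI is pre-reversible if it satisfies SP, BTI, WF, PCI; a combined LTS admits pre-reversibility if some independence relation makes it a pre-reversible LTSI. Event equivalence $\sim$ is the smallest equivalence on transitions with $t\sim t'$ whenever $t,u,u',t'$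 form a square as in PCI with $t\mathrel\iota u$; events are $\sim$-classes $[t]$, forward events are classes of forward transitions, $\bar e=[\bar t]$. For a path $r$ and event $e$: $\sharp(\varepsilon,e)=0$, $\sharp(tr,e)=\sharp(r,e)+1$ if $t\in e$, $\sharp(r,e)-1$ if $t\in\bar e$, else $\sharp(r,e)$. Core independence $e\odot e'$: there are coinitial $t\in e$, $t'\in e'$ with $t\mathrel\iota t'$. For forward events: $e\le e'$ iff for all rooted paths $r$, $\sharp(r,e')>0$ implies $\sharp(r,e)>0$; $e\# e'$ iff there is no rooted path $r$ with $\sharp(r,e)>0$ and $\sharp(r,e')>0$. *)

(* Defs.v *)
From Stdlib Require Import ZArith Relations ClassicalEpsilon List.
Import ListNotations.
Set Implicit Arguments.
Open Scope Z_scope.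

(* A combined LTS is given by its forward relation; the backward relation is
   its converse:  P ~>^a Q  iff  Q -a-> P. *)
Record LTS := MkLTS {
  Proc : Type;
  Lab : Type;
  fstep : Proc -> Lab -> Proc -> Prop }.

Inductive dir := Fw | Bw.
Definition flip (d : dir) := match d with Fw => Bw | Bw => Fw end.

Section Defs.
Variable L : LTS.

Definition bstep (P : Proc L) (a : Lab L) (Q : Proc L) : Prop := fstep L Q a P.

Definition step (d : dir) P a Q := match d with Fw => fstep L P a Q | Bw => bstep P a Q end.

Record trans := Tr { src : Proc L; lab : Lab L; tgt : Proc L; dr : dir }.

Definition is_trans (t : trans) : Prop := step (dr t) (src t) (lab t) (tgt t).

Definition inv (t : trans) : trans := Tr (tgt t) (lab t) (src t) (flip (dr t)).

Definition coinitial (t u : trans) := src t = src u.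

Definition square (t u u' t' : trans) : Prop :=
  is_trans t /\ is_trans u /\ is_trans u' /\ is_trans t' /\
  src t = src u /\ src u' = tgt t /\ src t' = tgt u /\ tgt u' = tgt t' /\
  lab u' = lab u /\ dr u' = dr u /\ lab t' = lab t /\ dr t' = dr t.

Variable iota : trans -> trans -> Prop.

Definition indep_rel : Prop :=
  (forall t, ~ iota t t) /\ (forall t u, iota t u -> iota u t).

Definition SP : Prop :=
  forall t u, is_trans t -> is_trans u -> coinitial t u -> iota t u ->
    exists u' t', square t u u' t'.

Definition BTI : Prop :=
  forall t u, is_trans t -> is_trans u -> dr t = Bw -> dr u = Bw ->
    coinitial t u -> t <> u -> iota t u.

Definition PCI : Prop :=
  forall t u u' t', square t u u' t' -> iota t u -> iota u' (inv t).

Definition square_rel (t t' : trans) : Prop :=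
  exists u u', square t u u' t' /\ iota t u.

Definition ev_eq : trans -> trans -> Prop := clos_refl_sym_trans trans square_rel.

(* Events are represented by a transition e; t \in [e] iff ev_eq t e. *)
Fixpoint sharp (r : list trans) (e : trans) : Z :=
  match r with
  | nil => 0
  | t :: r' =>
      if excluded_middle_informative (ev_eq t e) then sharp r' e + 1
      else if excluded_middle_informative (ev_eq t (inv e)) then sharp r' e - 1
      else sharp r' e
  end.

Definition core_indep (e e' : trans) : Prop :=
  exists t t', is_trans t /\ is_trans t' /\ ev_eq t e /\ ev_eq t' e' /\
    coinitial t t' /\ iota t t'.

End Defs.

Section Paths.
Variable L : LTS.

Fixpoint path_from (P : Proc L) (r : list (trans L)) : Prop :=
  match r with
  | nil => True
  | t :: r' => is_trans t /\ src t = P /\ path_from (tgt t) r'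
  end.

Definition rooted (P : Proc L) : Prop := forall a Q, ~ @bstep L P a Q.

Definition rooted_path (r : list (trans L)) : Prop :=
  exists P, rooted P /\ path_from P r.

Definition WF : Prop :=
  ~ exists f : nat -> Proc L, forall i, exists a, fstep L (f (S i)) a (f i).

Definition pre_reversible (iota : trans L -> trans L -> Prop) : Prop :=
  indep_rel iota /\ SP iota /\ BTI iota /\ WF /\ PCI iota.

Definition admits_pre_reversibility : Prop := exists iota, pre_reversible iota.

Variable iota : trans L -> trans L -> Prop.

Definition causal_le (e e' : trans L) : Prop :=
  forall r, rooted_path r -> sharp iota r e' > 0 -> sharp iota r e > 0.

Definition conflict (e e' : trans L) : Prop :=
  ~ exists r, rooted_path r /\ sharp iota r e > 0 /\ sharp iota r e' > 0.

End Paths.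

(* Main.v *)
Require Import Defs.
From Stdlib Require Import ZArith Relations ClassicalEpsilon List.
Set Implicit Arguments.

Section Aux.
Variable L : LTS.

Lemma inv_inv (t : trans L) : inv (inv t) = t.
Proof. destruct t as [s l g d]; destruct d; reflexivity. Qed.

Lemma is_trans_inv (t : trans L) : is_trans t -> is_trans (inv t).
Proof. destruct t as [s l g d]; destruct d; unfold is_trans, inv; simpl; auto. Qed.

Lemma square_sym (t u u' t' : trans L) : square t u u' t' -> square u t t' u'.
Proof. unfold square; intuition congruence. Qed.

Lemma square_inv1 (t u u' t' : trans L) : dr u = Bw -> square t u u' t' ->
  square (inv t) u' u (inv t').
Proof.
  intros Hd H. destruct t as [s1 l1 g1 d1], u as [s2 l2 g2 d2], u' as [s3 l3 g3 d3],
    t' as [s4 l4 g4 d4]; unfold square in *; simpl in *.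
  destruct H as (H1&H2&H3&H4&H5&H6&H7&H8&H9&H10&H11&H12); subst.
  repeat split; auto; apply is_trans_inv; assumption.
Qed.

Lemma square_inv2 (t u u' t' : trans L) : square t u u' t' ->
  square (inv u') (inv t') (inv t) (inv u).
Proof.
  intros H. destruct t as [s1 l1 g1 d1], u as [s2 l2 g2 d2], u' as [s3 l3 g3 d3],
    t' as [s4 l4 g4 d4]; unfold square in *; simpl in *.
  destruct H as (H1&H2&H3&H4&H5&H6&H7&H8&H9&H10&H11&H12); subst.
  repeat split; auto; apply is_trans_inv; assumption.
Qed.

Lemma sq_eq (t u u' t' : trans L) : square t u u' t' -> u' = t' -> t = u.
Proof.
  intros H E; subst. destruct t as [s1 l1 g1 d1], u as [s2 l2 g2 d2],
    t' as [s4 l4 g4 d4]; unfold square in *; simpl in *.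
  destruct H as (H1&H2&H3&H4&H5&H6&H7&H8&H9&H10&H11&H12); subst. reflexivity.
Qed.

Variable iota : trans L -> trans L -> Prop.
Hypothesis Hi : indep_rel iota.
Hypothesis Hb : BTI iota.
Hypothesis Hp : PCI iota.

Lemma forced (t u u' t' : trans L) : square t u u' t' -> t <> u ->
  u' <> inv t -> t' <> inv u -> iota t u.
Proof.
  intros Hs Htu H1 H2. destruct Hi as [Hirr Hsym].
  pose proof Hs as Hs'. unfold square in Hs'.
  destruct Hs' as (T1&T2&T3&T4&E1&E2&E3&E4&E5&E6&E7&E8).
  destruct (dr u) eqn:Du; destruct (dr t) eqn:Dt.
  -
    assert (Hb1 : iota (inv u') (inv t')).
    { assert (D1 : dr (inv u') = Bw) by (unfold inv; simpl; rewrite ?E6, ?Du; reflexivity).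
      assert (D2 : dr (inv t') = Bw) by (unfold inv; simpl; rewrite ?E8, ?Dt; reflexivity).
      assert (C : coinitial (inv u') (inv t')) by (unfold coinitial, inv; simpl; auto).
      assert (N : inv u' <> inv t').
      { intro Heq. apply Htu. apply (sq_eq Hs).
        rewrite <- (inv_inv u'), <- (inv_inv t'), Heq; reflexivity. }
      apply Hb; auto; apply is_trans_inv; auto. }
    pose proof (Hp (square_inv2 Hs) Hb1) as Hx. rewrite inv_inv in Hx.
    assert (Hs2 : square (inv t) u' u (inv t')).
    { destruct t as [s1 l1 g1 d1], u as [s2 l2 g2 d2], u' as [s3 l3 g3 d3],
        t' as [s4 l4 g4 d4]; unfold square in *; simpl in *; subst.
      repeat split; auto; apply is_trans_inv; assumption. }
    pose proof (Hp Hs2 Hx) as Hy. rewrite inv_inv in Hy. auto.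
  -
    apply Hsym.
    assert (Hb1 : iota (inv u) t').
    { assert (D1 : dr (inv u) = Bw) by (unfold inv; simpl; rewrite ?Du; reflexivity).
      assert (D2 : dr t' = Bw) by congruence.
      assert (C : coinitial (inv u) t') by (unfold coinitial, inv; simpl; auto).
      apply Hb; auto; apply is_trans_inv; auto. }
    pose proof (Hp (square_inv1 Dt (square_sym Hs)) Hb1) as Hx.
    rewrite inv_inv in Hx. auto.
  -
    assert (Hb1 : iota (inv t) u').
    { assert (D1 : dr (inv t) = Bw) by (unfold inv; simpl; rewrite ?Dt; reflexivity).
      assert (D2 : dr u' = Bw) by congruence.
      assert (C : coinitial (inv t) u') by (unfold coinitial, inv; simpl; auto).
      apply Hb; auto; apply is_trans_inv; auto. }
    pose proof (Hp (square_inv1 Du Hs) Hb1) as Hx.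
    rewrite inv_inv in Hx. auto.
  - apply Hb; auto.
Qed.

Lemma nec (t u u' t' : trans L) : square t u u' t' -> iota t u ->
  t <> u /\ u' <> inv t /\ t' <> inv u.
Proof.
  intros Hs H. destruct Hi as [Hirr Hsym].
  split; [|split].
  - intro E; subst; eapply Hirr; eauto.
  - intro E. pose proof (Hp Hs H). rewrite E in H0. eapply Hirr; eauto.
  - intro E. pose proof (Hp (square_sym Hs) (Hsym _ _ H)).
    rewrite E in H0. eapply Hirr; eauto.
Qed.
End Aux.

Lemma sq_transfer (L : LTS) (i1 i2 : trans L -> trans L -> Prop) :
  indep_rel i1 -> PCI i1 -> indep_rel i2 -> BTI i2 -> PCI i2 ->
  forall t u u' t', square t u u' t' -> i1 t u -> i2 t u.
Proof.
  intros. destruct (nec H H0 H4 H5) as (?&?&?). eapply forced; eauto.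
Qed.

Lemma ev_transfer (L : LTS) (i1 i2 : trans L -> trans L -> Prop) :
  indep_rel i1 -> PCI i1 -> indep_rel i2 -> BTI i2 -> PCI i2 ->
  forall t t', ev_eq i1 t t' -> ev_eq i2 t t'.
Proof.
  intros. induction H4.
  - apply rst_step. destruct H4 as (u&u'&Hs&Hi). exists u, u'; split; auto.
    exact (sq_transfer H H0 H1 H2 H3 Hs Hi).
  - apply rst_refl.
  - apply rst_sym; auto.
  - eapply rst_trans; eauto.
Qed.

Lemma core_transfer (L : LTS) (i1 i2 : trans L -> trans L -> Prop) :
  indep_rel i1 -> SP i1 -> PCI i1 -> indep_rel i2 -> BTI i2 -> PCI i2 ->
  forall e e', core_indep i1 e e' -> core_indep i2 e e'.
Proof.
  intros. destruct H5 as (t&t'&T1&T2&E1&E2&C&I).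
  destruct (H0 t t' T1 T2 C I) as (u'&t''&Hs).
  exists t, t'; repeat split; auto.
  - exact (ev_transfer H H1 H2 H3 H4 E1).
  - exact (ev_transfer H H1 H2 H3 H4 E2).
  - exact (sq_transfer H H1 H2 H3 H4 Hs I).
Qed.

Lemma sharp_eq (L : LTS) (i1 i2 : trans L -> trans L -> Prop) :
  (forall t t', ev_eq i1 t t' <-> ev_eq i2 t t') ->
  forall r e, sharp i1 r e = sharp i2 r e.
Proof.
  intros H r e. induction r as [|t r IH]; simpl; auto.
  destruct (excluded_middle_informative (ev_eq i1 t e)) as [A|A];
  destruct (excluded_middle_informative (ev_eq i2 t e)) as [B|B];
  try (exfalso; firstorder fail).
  - rewrite IH; auto.
  - destruct (excluded_middle_informative (ev_eq i1 t (inv e))) as [C|C];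
    destruct (excluded_middle_informative (ev_eq i2 t (inv e))) as [D|D];
    try (exfalso; firstorder fail); rewrite IH; auto.
Qed.

Theorem proposition5p12 (L : LTS) :
  admits_pre_reversibility L ->
  forall iota1 iota2 : trans L -> trans L -> Prop,
    indep_rel iota1 -> SP iota1 -> BTI iota1 -> PCI iota1 ->
    indep_rel iota2 -> SP iota2 -> BTI iota2 -> PCI iota2 ->
    (forall t t', is_trans t -> is_trans t' ->
       (ev_eq iota1 t t' <-> ev_eq iota2 t t')) /\
    (forall e e', is_trans e -> is_trans e' ->
       (core_indep iota1 e e' <-> core_indep iota2 e e')) /\
    (forall e e', is_trans e -> is_trans e' -> dr e = Fw -> dr e' = Fw ->
       (causal_le iota1 e e' <-> causal_le iota2 e e')) /\
    (forall e e', is_trans e -> is_trans e' -> dr e = Fw -> dr e' = Fw ->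
       (conflict iota1 e e' <-> conflict iota2 e e')).
Proof.
  intros _ i1 i2 A1 S1 B1 P1 A2 S2 B2 P2.
  assert (EV : forall t t', ev_eq i1 t t' <-> ev_eq i2 t t').
  { split; apply ev_transfer; auto. }
  pose proof (sharp_eq EV) as SH.
  split; [|split; [|split]].
  - intros; apply EV.
  - intros; split; apply core_transfer; auto.
  - intros. unfold causal_le. split; intros Hc r R; specialize (Hc r R);
      rewrite ?SH in *; auto.
  - intros. unfold conflict. split; intros Hc [r Hr]; apply Hc; exists r;
      rewrite ?SH in *; auto.
Qed.
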